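(* Let $X$ be an orthomodular lattice. For every $a\in X$, the downset morphism $a:\downarrow a\to X$ is a dagger kernel in $\mathbf{OMLatGal}$, and the map $X\to\mathrm{KSub}(X)$, $a\mapsto(a:\downarrow a\to X)$, is an isomorphism of orthomodular lattices. It is natural in the sense that for every morphism $f:X\to Y$ of $\mathbf{OMLatGal}$, under these isomorphisms $\exists_f:\mathrm{KSub}(X)\to\mathrm{KSub}(Y)$ corresponds to $a\mapsto f_*(a)^\perp$ and $f^{-1}:\mathrm{KSub}(Y)\to\mathrm{KSub}(X)$ corresponds to $b\mapsto f^*(b^\perp)$.
   Context: An orthomodular lattice is a bounded lattice with an order-reversing involution $x\mapsto x^\perp$ such that $x\wedge x^\perp=0$, $x\vee x^\perp=1$, and $x\le y$ implies $y=x\vee(x^\perp\wedge y)$. The category $\mathbf{OMLatGal}$ has orthomodular lattices as objects; a morphism $f:X\to Y$ is a pair $(f_*,f^* )$ of order-reversing functions $f_*:X\to Y$, $f^*:Y\to X$ such that $y\le f_*(x)$ iff $x\le f^*(y)$. The identity on $X$ is the pair whose both components are $x\mapsto x^\perp$. Composition: $(g\circ f)_*=g_*\circ(-)^\perp\circ f_*$, $(g\circ f)^*=f^*\circ(-)^\perp\circ g^*$. Dagger: $(f_*,f^* )^\dagger=(f^*,f_* )$. It is a dagger kernel category whose zero object is the one-element lattice, with the kernel of $f$ being the downset morphism $\downarrow f^*(1)\to X$; here, for $a\in X$, $\downarrow a=\{u\le a\}$ with complement $u^{\perp_a}=a\wedge u^\perp$, and $a:\downarrow a\to X$ has $a_*(u)=u^\perp$,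 $a^*(x)=a\wedge x^\perp$. In a dagger kernel category, $\mathrm{KSub}(X)$ is the poset of dagger-mono kernels into $X$ modulo isomorphism, ordered by $m\le n$ iff $m=n\circ\varphi$ for some $\varphi$; it is an orthomodular lattice with $m^\perp=\ker(m^\dagger)$. $\mathrm{coker}(f)=\ker(f^\dagger)^\dagger$, $f^{-1}(n)=\ker(\mathrm{coker}(n)\circ f)$, and $\exists_f(m)=\ker(\mathrm{coker}(f\circ m))$. *)

(* Defs.v *)
From Stdlib Require Import Classical.

Record OMLd := MkOML {
  car :> Type;
  le : car -> car -> Prop;
  meet : car -> car -> car;
  join : car -> car -> car;
  bot : car;
  top : car;
  orth : car -> car }.

Arguments le {o} _ _.
Arguments meet {o} _ _.
Arguments join {o} _ _.
Arguments orth {o} _.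

Record isOML (X : OMLd) : Prop := {
  le_refl : forall x : X, le x x;
  le_trans : forall x y z : X, le x y -> le y z -> le x z;
  le_antisym : forall x y : X, le x y -> le y x -> x = y;
  meet_glb : forall x y z : X, le z (meet x y) <-> (le z x /\ le z y);
  join_lub : forall x y z : X, le (join x y) z <-> (le x z /\ le y z);
  bot_le : forall x : X, le (bot X) x;
  le_top : forall x : X, le x (top X);
  orth_rev : forall x y : X, le x y -> le (orth y) (orth x);
  orth_inv : forall x : X, orth (orth x) = x;
  meet_orth : forall x : X, meet x (orth x) = bot X;
  join_orth : forall x : X, join x (orth x) = top X;
  orthomod : forall x y : X, le x y -> y = join x (meet (orth x) y) }.

Arguments le_refl {X} _ _.
Arguments le_trans {X} _ _ _ _ _ _.
Arguments meet_glb {X} _ _ _ _.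
Arguments join_lub {X} _ _ _ _.
Arguments bot_le {X} _ _.

Lemma meet_le_l (X : OMLd) (HX : isOML X) (x y : X) : le (meet x y) x.
Proof. exact (proj1 (proj1 (meet_glb HX x y (meet x y)) (le_refl HX _))). Qed.

Record mor (X Y : OMLd) := Mor { ms : X -> Y ; mu : Y -> X }.
Arguments Mor {X Y} _ _.
Arguments ms {X Y} _ _.
Arguments mu {X Y} _ _.

(** (f_*, f^* ) order reversing with  y <= f_*(x)  iff  x <= f^*(y). *)
Definition isMor {X Y : OMLd} (f : mor X Y) : Prop :=
  (forall x x' : X, le x x' -> le (ms f x') (ms f x)) /\
  (forall y y' : Y, le y y' -> le (mu f y') (mu f y)) /\
  (forall (x : X) (y : Y), le y (ms f x) <-> le x (mu f y)).

Definition meq {X Y : OMLd} (f g : mor X Y) : Prop :=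
  (forall x, ms f x = ms g x) /\ (forall y, mu f y = mu g y).

Definition idm (X : OMLd) : mor X X := Mor (@orth X) (@orth X).

Definition comp {X Y Z : OMLd} (g : mor Y Z) (f : mor X Y) : mor X Z :=
  Mor (fun x => ms g (orth (ms f x))) (fun z => mu f (orth (mu g z))).

Definition dag {X Y : OMLd} (f : mor X Y) : mor Y X := Mor (mu f) (ms f).

Definition ZeroO : OMLd :=
  MkOML unit (fun _ _ => True) (fun _ _ => tt) (fun _ _ => tt) tt tt (fun _ => tt).

Definition toZero (X : OMLd) : mor X ZeroO := @Mor X ZeroO (fun _ => (tt : car ZeroO)) (fun _ => top X).
Definition fromZero (Y : OMLd) : mor ZeroO Y := @Mor ZeroO Y (fun _ => top Y) (fun _ => (tt : car ZeroO)).
Definition zmor (X Y : OMLd) : mor X Y := comp (fromZero Y) (toZero X).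

Definition isKernel {X Y K : OMLd} (f : mor X Y) (k : mor K X) : Prop :=
  isMor k /\ meq (comp f k) (zmor K Y) /\
  forall (Z : OMLd), isOML Z -> forall g : mor Z X, isMor g ->
    meq (comp f g) (zmor Z Y) ->
    exists h : mor Z K, isMor h /\ meq (comp k h) g /\
      forall h' : mor Z K, isMor h' -> meq (comp k h') g -> meq h' h.

Definition isDaggerMono {K X : OMLd} (k : mor K X) : Prop :=
  meq (comp (dag k) k) (idm K).

Definition isDaggerKernel {K X : OMLd} (k : mor K X) : Prop :=
  isOML K /\ isDaggerMono k /\
  exists (Y : OMLd), isOML Y /\ exists f : mor X Y, isMor f /\ isKernel f k.

(** KSub(X): order and identification modulo isomorphism. *)
Definition ksle {K L X : OMLd} (m : mor K X) (n : mor L X) : Prop :=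
  exists phi : mor K L, isMor phi /\ meq m (comp n phi).

Definition kseq {K L X : OMLd} (m : mor K X) (n : mor L X) : Prop :=
  exists (phi : mor K L) (psi : mor L K), isMor phi /\ isMor psi /\
    meq (comp psi phi) (idm K) /\ meq (comp phi psi) (idm L) /\
    meq m (comp n phi).

Section Down.
Variables (X : OMLd) (HX : isOML X).

Definition down (a : X) : OMLd :=
  MkOML {u : X | le u a}
    (fun u v => le (proj1_sig u) (proj1_sig v))
    (fun u v => exist (fun w => le w a) (meet (proj1_sig u) (proj1_sig v))
                  (le_trans HX _ _ _ (meet_le_l X HX _ _) (proj2_sig u)))
    (fun u v => exist (fun w => le w a) (join (proj1_sig u) (proj1_sig v))
                  (proj2 (join_lub HX _ _ a) (conj (proj2_sig u) (proj2_sig v))))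
    (exist (fun u => le u a) (bot X) (bot_le HX a))
    (exist (fun u => le u a) a (le_refl HX a))
    (fun u => exist (fun w => le w a) (meet a (orth (proj1_sig u))) (meet_le_l X HX _ _)).

Definition dmor (a : X) : mor (down a) X :=
  @Mor (down a) X (fun u : {w : X | le w a} => orth (proj1_sig u))
      (fun x => exist (fun u => le u a) (meet a (orth x)) (meet_le_l X HX _ _)).
End Down.

(** The chosen kernel of f : X → Y is the downset morphism ↓f^*(1) → X. *)
Definition kerm {X Y : OMLd} (HX : isOML X) (f : mor X Y) :=
  dmor X HX (mu f (top Y)).

Definition coker {X Y : OMLd} (HY : isOML Y) (f : mor X Y) :=
  dag (kerm HY (dag f)).

Definition preim {X Y L : OMLd} (HX : isOML X) (HY : isOML Y)
  (f : mor X Y) (n : mor L Y) :=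
  kerm HX (comp (coker HY n) f).

Definition exim {X Y K : OMLd} (HY : isOML Y) (f : mor X Y) (m : mor K X) :=
  kerm HY (coker HY (comp f m)).

(* Main.v *)
Require Import Defs.
From Stdlib Require Import ProofIrrelevance.

Lemma le_ext (X : OMLd) (HX : isOML X) (p q : X) :
  (forall z, le z p <-> le z q) -> p = q.
Proof.
  intros H. apply (le_antisym X HX).
  - apply H, (le_refl HX).
  - apply H, (le_refl HX).
Qed.

Lemma meet_le_r (X : OMLd) (HX : isOML X) (x y : X) : le (meet x y) y.
Proof. exact (proj2 (proj1 (meet_glb HX x y (meet x y)) (le_refl HX _))). Qed.

Lemma le_meet (X : OMLd) (HX : isOML X) (x y z : X) : le z x -> le z y -> le z (meet x y).
Proof. intros; apply (meet_glb HX); auto. Qed.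

Lemma join_le_l (X : OMLd) (HX : isOML X) (x y : X) : le x (join x y).
Proof. exact (proj1 (proj1 (join_lub HX x y (join x y)) (le_refl HX _))). Qed.

Lemma join_le_r (X : OMLd) (HX : isOML X) (x y : X) : le y (join x y).
Proof. exact (proj2 (proj1 (join_lub HX x y (join x y)) (le_refl HX _))). Qed.

Lemma join_intro (X : OMLd) (HX : isOML X) (x y z : X) : le x z -> le y z -> le (join x y) z.
Proof. intros; apply (join_lub HX); auto. Qed.

Lemma orth_le_iff (X : OMLd) (HX : isOML X) (x y : X) : le (orth x) (orth y) <-> le y x.
Proof.
  split; intros H.
  - pose proof (orth_rev X HX _ _ H) as H'. rewrite !(orth_inv X HX) in H'. exact H'.
  - apply (orth_rev X HX); exact H.
Qed.

Lemma orth_swap (X : OMLd) (HX : isOML X) (x y : X) : le x (orth y) <-> le y (orth x).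
Proof.
  split; intros H; pose proof (orth_rev X HX _ _ H) as H'; rewrite (orth_inv X HX) in H'; exact H'.
Qed.

Lemma orth_swap2 (X : OMLd) (HX : isOML X) (x y : X) : le (orth x) y <-> le (orth y) x.
Proof.
  split; intros H; pose proof (orth_rev X HX _ _ H) as H'; rewrite (orth_inv X HX) in H'; exact H'.
Qed.

Lemma orth_inj (X : OMLd) (HX : isOML X) (x y : X) : orth x = orth y -> x = y.
Proof. intros H. rewrite <- (orth_inv X HX x), <- (orth_inv X HX y), H. reflexivity. Qed.

Lemma demorgan_join (X : OMLd) (HX : isOML X) (x y : X) :
  orth (join x y) = meet (orth x) (orth y).
Proof.
  apply (le_ext X HX); intros z. rewrite (orth_swap X HX), (join_lub HX), (meet_glb HX).
  rewrite !(orth_swap X HX z). tauto.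
Qed.

Lemma demorgan_meet (X : OMLd) (HX : isOML X) (x y : X) :
  orth (meet x y) = join (orth x) (orth y).
Proof.
  apply (orth_inj X HX). rewrite (demorgan_join X HX), !(orth_inv X HX). reflexivity.
Qed.

Lemma meet_comm (X : OMLd) (HX : isOML X) (x y : X) : meet x y = meet y x.
Proof. apply (le_ext X HX); intros z; rewrite !(meet_glb HX); tauto. Qed.

Lemma le_meet_eq (X : OMLd) (HX : isOML X) (x y : X) : le x y -> meet x y = x.
Proof.
  intros H. apply (le_ext X HX); intros z; rewrite (meet_glb HX); split.
  - tauto.
  - intros Hz; split; [exact Hz | exact (le_trans HX _ _ _ Hz H)].
Qed.

Lemma OM1 (X : OMLd) (HX : isOML X) (u a : X) : le u a ->
  meet a (orth (meet a (orth u))) = u.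
Proof.
  intros H.
  pose proof (orthomod X HX (orth a) (orth u) (orth_rev X HX _ _ H)) as E.
  apply (f_equal (@orth X)) in E.
  rewrite (orth_inv X HX), (demorgan_join X HX), !(orth_inv X HX) in E.
  symmetry; exact E.
Qed.

Lemma sig_ext (X : OMLd) (HX : isOML X) (a : X) (u v : down X HX a) :
  proj1_sig u = proj1_sig v -> u = v.
Proof.
  destruct u as [u pu], v as [v pv]; simpl; intros ->. f_equal. apply proof_irrelevance.
Qed.

Lemma down_OML (X : OMLd) (HX : isOML X) (a : X) : isOML (down X HX a).
Proof.
  split.
  - intros u. exact (le_refl HX _).
  - intros u v w. exact (le_trans HX _ _ _).
  - intros u v H1 H2. apply sig_ext. exact (le_antisym X HX _ _ H1 H2).
  - intros u v w. exact (meet_glb HX _ _ _).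
  - intros u v w. exact (join_lub HX _ _ _).
  - intros u. exact (bot_le HX _).
  - intros u. exact (proj2_sig u).
  - intros u v H. simpl. apply (le_meet X HX).
    + apply (meet_le_l X HX).
    + apply (le_trans HX _ _ _ (meet_le_r X HX _ _)). apply (orth_rev X HX). exact H.
  - intros u. apply sig_ext. simpl. apply OM1; [exact HX | exact (proj2_sig u)].
  - intros u. apply sig_ext. simpl. apply (le_antisym X HX).
    + rewrite <- (meet_orth X HX (proj1_sig u)). apply (le_meet X HX).
      * apply (meet_le_l X HX).
      * apply (le_trans HX _ _ _ (meet_le_r X HX _ _)). apply (meet_le_r X HX).
    + apply (bot_le HX).
  - intros u. apply sig_ext. simpl.
    rewrite (meet_comm X HX). symmetry. apply (orthomod X HX). exact (proj2_sig u).
  - intros u v H. apply sig_ext. simpl.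
    replace (meet (meet a (orth (proj1_sig u))) (proj1_sig v))
      with (meet (orth (proj1_sig u)) (proj1_sig v)).
    + apply (orthomod X HX). exact H.
    + apply (le_ext X HX); intros z. rewrite !(meet_glb HX). split.
      * intros [H1 H2]. repeat split; auto. exact (le_trans HX _ _ _ H2 (proj2_sig v)).
      * tauto.
Qed.

Lemma mk_isMor {A B : OMLd} (HA : isOML A) (HB : isOML B) (f : mor A B) :
  (forall x y, le y (ms f x) <-> le x (mu f y)) -> isMor f.
Proof.
  intros G. split; [|split]; [| | exact G].
  - intros x x' H. apply G. apply (le_trans HA _ _ _ H). apply G. apply (le_refl HB).
  - intros y y' H. apply G. apply (le_trans HB _ _ _ H). apply G. apply (le_refl HA).
Qed.

Lemma meq_refl {A B : OMLd} (f : mor A B) : meq f f.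
Proof. split; reflexivity. Qed.
Lemma meq_sym {A B : OMLd} (f g : mor A B) : meq f g -> meq g f.
Proof. intros [H1 H2]; split; intros; symmetry; auto. Qed.
Lemma meq_trans {A B : OMLd} (f g h : mor A B) : meq f g -> meq g h -> meq f h.
Proof. intros [H1 H2] [H3 H4]; split; intros; [rewrite H1; auto | rewrite H2; auto]. Qed.
Lemma meq_comp_l {A B C : OMLd} (h : mor B C) (f g : mor A B) :
  meq f g -> meq (comp h f) (comp h g).
Proof. intros [H1 H2]; split; intros; simpl; [rewrite H1 | rewrite H2]; reflexivity. Qed.
Lemma meq_comp_r {A B C : OMLd} (f g : mor B C) (h : mor A B) :
  meq f g -> meq (comp f h) (comp g h).
Proof. intros [H1 H2]; split; intros; simpl; [rewrite H1 | rewrite H2]; reflexivity. Qed.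
Lemma comp_id_r {A B : OMLd} (HA : isOML A) (HB : isOML B) (f : mor A B) :
  meq (comp f (idm A)) f.
Proof. split; intros; simpl; rewrite orth_inv; auto. Qed.

Lemma isMor_idm (A : OMLd) (HA : isOML A) : isMor (idm A).
Proof. apply (mk_isMor HA HA). intros x y. simpl. apply (orth_swap A HA). Qed.

Lemma isMor_dag {A B : OMLd} (f : mor A B) : isMor f -> isMor (dag f).
Proof.
  intros [H1 [H2 H3]]. split; [exact H2 | split; [exact H1|]].
  intros x y. simpl. rewrite H3. tauto.
Qed.

Lemma isMor_comp {A B C : OMLd} (HA : isOML A) (HB : isOML B) (HC : isOML C)
  (g : mor B C) (f : mor A B) : isMor g -> isMor f -> isMor (comp g f).
Proof.
  intros [_ [_ Gg]] [_ [_ Gf]]. apply (mk_isMor HA HC). intros x z. simpl.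
  rewrite Gg, (orth_swap2 B HB), Gf. tauto.
Qed.

Lemma isMor_dmor (X : OMLd) (HX : isOML X) (c : X) : isMor (dmor X HX c).
Proof.
  apply (mk_isMor (down_OML X HX c) HX). intros u y. simpl.
  rewrite (meet_glb HX), (orth_swap X HX). split.
  - intros H; split; [exact (proj2_sig u) | exact H].
  - tauto.
Qed.

Lemma kernel_lemma (X Y : OMLd) (HX : isOML X) (HY : isOML Y) (f : mor X Y) (c : X) :
  isMor f -> mu f (top Y) = c -> isKernel f (dmor X HX c).
Proof.
  intros Hf Ec. destruct Hf as [Hf1 [Hf2 Hf3]].
  split; [apply isMor_dmor|]. split.
  - split.
    + intros u. simpl. rewrite (orth_inv X HX). apply (le_antisym Y HY).
      * apply (le_top Y HY).
      * apply Hf3. rewrite Ec. exact (proj2_sig u).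
    + intros y. apply sig_ext. simpl. rewrite (orth_inv X HX).
      apply (le_meet_eq X HX). rewrite <- Ec. apply Hf2. apply (le_top Y HY).
  - intros Z HZ g Hg [H0 _].
    assert (Hw : forall z, le (orth (ms g z)) c).
    { intros z. rewrite <- Ec. apply Hf3. specialize (H0 z). simpl in H0.
      rewrite H0. apply (le_refl HY). }
    destruct Hg as [Hg1 [Hg2 Hg3]].
    set (h := @Mor Z (down X HX c)
          (fun z => exist (fun w => le w c) (meet c (ms g z)) (meet_le_l X HX _ _))
          (fun u => mu g (proj1_sig u))).
    assert (Hh : isMor h).
    { apply (mk_isMor HZ (down_OML X HX c)). intros z u. simpl.
      rewrite <- Hg3, (meet_glb HX). split.
      - tauto.
      - intros H; split; [exact (proj2_sig u) | exact H]. }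
    exists h. split; [exact Hh|]. split.
    + split.
      * intros z. simpl. rewrite <- (orth_inv X HX (ms g z)) at 1.
        rewrite (OM1 X HX _ _ (Hw z)), (orth_inv X HX). reflexivity.
      * intros x. simpl. apply (le_ext Z HZ); intros z. rewrite <- !Hg3.
        rewrite (demorgan_meet X HX), (orth_inv X HX). split.
        -- intros H. apply (le_trans HX _ _ _ (join_le_r X HX (orth c) x)).
           rewrite (orthomod X HX (orth c) (join (orth c) x) (join_le_l X HX _ _)).
           rewrite (orth_inv X HX). apply (join_intro X HX); [|exact H].
           apply (orth_swap2 X HX). exact (Hw z).
        -- intros H. apply (le_trans HX _ _ _ (meet_le_r X HX _ _)).
           apply (join_intro X HX); [|exact H]. apply (orth_swap2 X HX). exact (Hw z).
    + intros h' Hh' [E1 E2]. split.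
      * intros z. apply sig_ext. simpl. specialize (E1 z). simpl in E1.
        rewrite <- E1. symmetry. exact (OM1 X HX _ _ (proj2_sig (ms h' z))).
      * intros u. simpl. apply (le_ext Z HZ); intros z.
        destruct Hh' as [_ [_ G']]. rewrite <- G', <- Hg3.
        rewrite <- (E1 z). simpl.
        rewrite <- (OM1 X HX _ _ (proj2_sig (ms h' z))) at 1.
        rewrite (meet_glb HX). split.
        -- tauto.
        -- intros H. split; [exact (proj2_sig u) | exact H].
Qed.

Lemma kseq_eq (X : OMLd) (HX : isOML X) (a b : X) : a = b ->
  kseq (dmor X HX a) (dmor X HX b).
Proof.
  intros <-. pose proof (down_OML X HX a) as Ha.
  exists (idm _), (idm _). split; [apply isMor_idm; exact Ha|].
  split; [apply isMor_idm; exact Ha|].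
  split; [apply comp_id_r; exact Ha|]. split; [apply comp_id_r; exact Ha|].
  apply meq_sym. apply comp_id_r; [exact Ha | exact HX].
Qed.

Lemma ksle_le (X : OMLd) (HX : isOML X) (a b : X) :
  ksle (dmor X HX a) (dmor X HX b) -> le a b.
Proof.
  intros [phi [_ [E _]]].
  specialize (E (exist (fun u => le u a) a (le_refl HX a))). simpl in E.
  apply (orth_inj X HX) in E. rewrite E. apply (meet_le_l X HX).
Qed.

Lemma le_ksle (X : OMLd) (HX : isOML X) (a b : X) :
  le a b -> ksle (dmor X HX a) (dmor X HX b).
Proof.
  intros Hab.
  set (phi := @Mor (down X HX a) (down X HX b)
     (fun u => exist (fun w => le w b) (meet b (orth (proj1_sig u))) (meet_le_l X HX _ _))
     (fun v => exist (fun w => le w a) (meet a (orth (proj1_sig v))) (meet_le_l X HX _ _))).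
  exists phi. split.
  - apply (mk_isMor (down_OML X HX a) (down_OML X HX b)). intros u v. simpl.
    rewrite !(meet_glb HX). rewrite (orth_swap X HX).
    pose proof (proj2_sig u); pose proof (proj2_sig v). simpl in *. tauto.
  - split.
    + intros u. simpl. f_equal. symmetry. apply OM1; [exact HX|].
      exact (le_trans HX _ _ _ (proj2_sig u) Hab).
    + intros x. apply sig_ext. simpl.
      pose proof (OM1 X HX (meet b (orth x)) b (meet_le_l X HX _ _)) as E.
      apply (le_ext X HX); intros z. rewrite !(meet_glb HX).
      split; intros [Hza Hz]; split; auto.
      * assert (Hzb : le z (meet b (orth x))).
        { apply (le_meet X HX); [exact (le_trans HX _ _ _ Hza Hab) | exact Hz]. }
        rewrite <- E in Hzb. exact (le_trans HX _ _ _ Hzb (meet_le_r X HX _ _)).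
      * assert (Hzb : le z (meet b (orth (meet b (orth (meet b (orth x))))))).
        { apply (le_meet X HX); [exact (le_trans HX _ _ _ Hza Hab) | exact Hz]. }
        rewrite E in Hzb. exact (le_trans HX _ _ _ Hzb (meet_le_r X HX _ _)).
Qed.

Lemma comp_assoc {A B C D : OMLd} (h : mor C D) (g : mor B C) (f : mor A B) :
  meq (comp h (comp g f)) (comp (comp h g) f).
Proof. split; reflexivity. Qed.

Theorem mainTheorem7 (X : OMLd) (HX : isOML X) :
  (forall a : X, isDaggerKernel (dmor X HX a)) /\
  (forall a b : X, le a b <-> ksle (dmor X HX a) (dmor X HX b)) /\
  (forall a b : X, kseq (dmor X HX a) (dmor X HX b) -> a = b) /\
  (forall (K : OMLd) (m : mor K X), isDaggerKernel m ->
     exists a : X, kseq m (dmor X HX a)) /\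
  (forall a : X, kseq (kerm HX (dag (dmor X HX a))) (dmor X HX (orth a))) /\
  (forall (Y : OMLd) (HY : isOML Y) (f : mor X Y), isMor f ->
     (forall a : X,
        kseq (exim HY f (dmor X HX a)) (dmor Y HY (orth (ms f a)))) /\
     (forall b : Y,
        kseq (preim HX HY f (dmor Y HY b)) (dmor X HX (mu f (orth b))))).
Proof.
  split; [|split; [|split; [|split; [|split]]]].
  - intros a. split; [apply down_OML|]. split.
    + split; intros u; apply sig_ext; simpl; rewrite (orth_inv X HX); reflexivity.
    + exists (down X HX (orth a)). split; [apply down_OML|].
      exists (dag (dmor X HX (orth a))). split.
      * apply isMor_dag, isMor_dmor.
      * apply kernel_lemma; [apply down_OML | apply isMor_dag, isMor_dmor |].
        simpl. apply (orth_inv X HX).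
  - intros a b; split; [apply le_ksle | apply ksle_le].
  - intros a b [phi [psi [Hphi [Hpsi [E1 [E2 Em]]]]]].
    apply (le_antisym X HX).
    + apply (ksle_le X HX). exists phi. split; assumption.
    + apply (ksle_le X HX). exists psi. split; [assumption|].
      eapply meq_trans; [apply meq_sym, comp_id_r; [apply down_OML | exact HX]|].
      eapply meq_trans; [apply meq_comp_l, meq_sym, E2|].
      eapply meq_trans; [apply comp_assoc|].
      apply meq_comp_r, meq_sym, Em.
  - intros K m [HK [_ [Y [HY [f [Hf [Hm [H0 Hu]]]]]]]].
    exists (mu f (top Y)).
    set (c := mu f (top Y)).
    destruct (kernel_lemma X Y HX HY f c Hf eq_refl) as [Hk [Hk0 Hku]].
    pose proof (down_OML X HX c) as Hc.
    destruct (Hku K HK m Hm H0) as [phi [Hphi [Ephi _]]].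
    destruct (Hu (down X HX c) Hc (dmor X HX c) Hk Hk0) as [psi [Hpsi [Epsi _]]].
    exists phi, psi. split; [exact Hphi|]. split; [exact Hpsi|]. split; [|split].
    + destruct (Hu K HK m Hm H0) as [h0 [_ [_ U]]].
      apply (meq_trans _ h0).
      * apply U; [apply (isMor_comp HK Hc HK); assumption|].
        eapply meq_trans; [apply comp_assoc|].
        eapply meq_trans; [apply meq_comp_r, Epsi|]. exact Ephi.
      * apply meq_sym, U; [apply isMor_idm; exact HK|]. apply comp_id_r; assumption.
    + destruct (Hku (down X HX c) Hc (dmor X HX c) Hk Hk0) as [h0 [_ [_ U]]].
      apply (meq_trans _ h0).
      * apply U; [apply (isMor_comp Hc HK Hc); assumption|].
        eapply meq_trans; [apply comp_assoc|].
        eapply meq_trans; [apply meq_comp_r, Ephi|]. exact Epsi.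
      * apply meq_sym, U; [apply isMor_idm; exact Hc|]. apply comp_id_r; assumption.
    + apply meq_sym, Ephi.
  - intros a. apply kseq_eq. reflexivity.
  - intros Y HY f Hf. split.
    + intros a. apply kseq_eq. simpl. rewrite (orth_inv X HX). reflexivity.
    + intros b. apply kseq_eq. simpl. rewrite (orth_inv Y HY). reflexivity.
Qed.
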